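(* Under the hypotheses and notation below, for every cluster $\mathrm{Cl}(y)$ and every $y'\in\mathrm{Cl}(y)$, we have $y'+e_Z(H_Zy')\in y+e_Z(H_Zy)+C_X^\perp$.
   Context: $\mathcal{C}=\mathrm{CSS}(C_X=\ker H_X,C_Z=\ker H_Z)$ is an $[[n,k,d]]_2$ CSS code ($H_Z\in\mathbb{F}_2^{m_Z\times n}$, $C_X^\perp\subseteq C_Z$) exhibiting $(c_1,c_2,\epsilon_0)$-clustering (for all $0<\epsilon<\epsilon_0$, every $y$ with $|H_Zy|\le\epsilon m_Z$ has $|y|_{C_X^\perp}\le c_1\epsilon n$ or $\ge c_2n$, and symmetrically for $X$), where $|y|_C=\min_{y'\in C}|y+y'|$. Let $\epsilon<\frac{1}{1000}\min\{\frac{\epsilon_0}{2},\frac{c_2}{4c_1},\frac{d}{2c_1n}\}$, $\epsilon'=1000\epsilon$, $G_Z^{\epsilon'}=\{y:|H_Zy|\le\epsilon'm_Z\}$. For $y\in G_Z^{\epsilon'}$, $\mathrm{Cl}(y)=\{y'\in G_Z^{\epsilon'}:|y+y'|_{C_X^\perp}\le2c_1\epsilon'n\}$; these clusters partition $G_Z^{\epsilon'}$, and $\mathrm{Cl}(y+c)=\mathrm{Cl}(y)+c$ for $c\in C_Z$. For each cluster let $\mathcal{T}(\mathrm{Cl}(y))=\{\mathrm{Cl}(y+c):c\in C_Z\}$ be its collection of translates, and for each such collection $\mathcal{T}$ fix an arbitrary representative cluster $R(\mathcal{T})\in\mathcal{T}$. For each syndrome $s=H_Zy$ with $y\in G_Z^{\epsilon'}$,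 fix an arbitrary element $e_Z(s)\in(y+C_Z)\cap R(\mathcal{T}(\mathrm{Cl}(y)))$ (this set is a nonempty coset of $C_X^\perp$, and it depends only on $s$). *)

(* Defs.v *)
From HB Require Import structures.
From mathcomp Require Import all_boot all_order all_algebra.
From mathcomp Require Import reals.
Set Implicit Arguments. Unset Strict Implicit. Unset Printing Implicit Defensive.
Import Order.TTheory GRing.Theory Num.Theory.
Local Open Scope ring_scope.

Notation vec n := 'cV['F_2]_n.

Definition wt (m : nat) (v : vec m) : nat := #|[set i | v i 0 != 0]|.

Definition kerH (m n : nat) (H : 'M['F_2]_(m, n)) : {set vec n} :=
  [set y | H *m y == 0].

Definition dual (n : nat) (C : {set vec n}) : {set vec n} :=
  [set x | [forall c in C, x^T *m c == 0]].

(* |y|_C = min_{y' in C} |y + y'|  (C is always nonempty where used;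
   the default n is an upper bound of every weight) *)
Definition distC (n : nat) (y : vec n) (C : {set vec n}) : nat :=
  \big[minn/n]_(c in C) wt (y + c).

Definition coset (n : nat) (y : vec n) (C : {set vec n}) : {set vec n} :=
  [set y + c | c in C].

(* minimum distance d of CSS(ker HX, ker HZ): min weight of a nontrivial
   logical operator (convention: n if there are none, i.e. k = 0) *)
Definition css_dist (mX mZ n : nat) (HX : 'M['F_2]_(mX, n)) (HZ : 'M['F_2]_(mZ, n)) : nat :=
  minn (\big[minn/n]_(z in kerH HZ :\: dual (kerH HX)) wt z)
       (\big[minn/n]_(x in kerH HX :\: dual (kerH HZ)) wt x).

Definition clustering (R : realType) (mX mZ n : nat)
  (HX : 'M['F_2]_(mX, n)) (HZ : 'M['F_2]_(mZ, n)) (c1 c2 eps0 : R) : Prop :=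
  0 < c1 /\ 0 < c2 /\ 0 < eps0 /\
  forall eps : R, 0 < eps -> eps < eps0 ->
    (forall y : vec n, (wt (HZ *m y))%:R <= eps * mZ%:R ->
        (distC y (dual (kerH HX)))%:R <= c1 * eps * n%:R \/
        c2 * n%:R <= (distC y (dual (kerH HX)))%:R) /\
    (forall x : vec n, (wt (HX *m x))%:R <= eps * mX%:R ->
        (distC x (dual (kerH HZ)))%:R <= c1 * eps * n%:R \/
        c2 * n%:R <= (distC x (dual (kerH HZ)))%:R).

Definition goodZ (R : realType) (mZ n : nat) (HZ : 'M['F_2]_(mZ, n)) (eps' : R)
  : {set vec n} := [set y | (wt (HZ *m y))%:R <= eps' * mZ%:R].

Definition cluster (R : realType) (mX mZ n : nat)
  (HX : 'M['F_2]_(mX, n)) (HZ : 'M['F_2]_(mZ, n)) (c1 eps' : R) (y : vec n)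
  : {set vec n} :=
  [set y' in goodZ HZ eps' |
     (distC (y + y') (dual (kerH HX)))%:R <= 2 * c1 * eps' * n%:R].

Definition translates (R : realType) (mX mZ n : nat)
  (HX : 'M['F_2]_(mX, n)) (HZ : 'M['F_2]_(mZ, n)) (c1 eps' : R) (y : vec n)
  : {set {set vec n}} :=
  [set cluster HX HZ c1 eps' (y + c) | c in kerH HZ].

(* Main.v *)
Require Import Defs.
From HB Require Import structures.
From mathcomp Require Import all_boot all_order all_algebra.
From mathcomp Require Import reals.
From mathcomp Require Import lra ring.
Import Order.TTheory GRing.Theory Num.Theory.
Local Open Scope ring_scope.
Set Implicit Arguments. Unset Strict Implicit.

Lemma F2_add (x : 'F_2) : x + x = 0.
Proof. exact: (addrr_pchar2 (pchar_Fp (isT : prime 2))). Qed.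

Lemma vadd2 m (x : vec m) : x + x = 0.
Proof. by apply/matrixP => i j; rewrite !mxE F2_add. Qed.

Lemma wt_add m (u v : vec m) : (wt (u + v) <= wt u + wt v)%N.
Proof.
rewrite /wt; apply: leq_trans (leq_card_setU _ _).
apply: subset_leq_card; apply/subsetP => i; rewrite !inE mxE.
by apply: contraR; rewrite negb_or !negbK => /andP[/eqP -> /eqP ->]; rewrite addr0.
Qed.

Lemma wt0 m (u : vec m) : wt u = 0%N -> u = 0.
Proof.
move/eqP; rewrite /wt cards_eq0 => /eqP E; apply/matrixP => i j.
rewrite (ord1 j) mxE; apply/eqP; apply: contraT => h.
have : i \in [set i | u i 0 != 0] by rewrite inE.
by rewrite E inE.
Qed.

Lemma wt_le m (u : vec m) : (wt u <= m)%N.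
Proof. by rewrite /wt; apply: leq_trans (max_card _) _; rewrite card_ord. Qed.

Lemma bigminn_le (I : finType) (P : pred I) (F : I -> nat) x j :
  P j -> (\big[minn/x]_(i | P i) F i <= F j)%N.
Proof.
move=> Pj.
have : j \in index_enum I by rewrite mem_index_enum.
elim: (index_enum I) => // a r IH; rewrite inE big_cons => /orP[/eqP <-|hj].
- by rewrite Pj geq_minl.
- case: (P a); last exact: IH.
  by apply: leq_trans (geq_minr _ _) (IH hj).
Qed.

Lemma bigminn_attain (I : finType) (P : pred I) (F : I -> nat) x :
  \big[minn/x]_(i | P i) F i = x \/ exists2 i, P i & \big[minn/x]_(i | P i) F i = F i.
Proof.
elim/big_rec: _ => [|i m Pi [->|[j Pj ->]]]; first by left.
- rewrite /minn; case: ltnP => _; [right; exists i => // | by left].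
- rewrite /minn; case: ltnP => _; [right; exists i => // | right; exists j => //].
Qed.

Lemma dual_add n (C : {set vec n}) (x y : vec n) : x \in dual C -> y \in dual C -> x + y \in dual C.
Proof.
rewrite !inE => /forallP hx /forallP hy; apply/forallP => c; apply/implyP => hc.
by rewrite linearD /= mulmxDl (eqP (implyP (hx c) hc)) (eqP (implyP (hy c) hc)) addr0.
Qed.

Lemma dual0 n (C : {set vec n}) : 0 \in dual C.
Proof. by rewrite inE; apply/forallP => c; rewrite trmx0 mul0mx eqxx implybT. Qed.

Lemma distC_le n (C : {set vec n}) (y c : vec n) : c \in C -> (distC y C <= wt (y + c))%N.
Proof. exact: bigminn_le. Qed.

Lemma distC_attain n (C : {set vec n}) (y : vec n) : 0 \in C -> exists2 c, c \in C & distC y C = wt (y + c).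
Proof.
move=> h0; case: (@bigminn_attain _ (mem C) (fun c => wt (y + c)) n) => [E|[c hc E]].
- exists 0 => //; apply/eqP; rewrite eqn_leq; apply/andP; split.
    exact: distC_le.
  by rewrite /distC E; apply: wt_le.
- by exists c.
Qed.


Lemma distD_tri n (C : {set vec n}) (a b : vec n) :
  (distC (a + b) (dual C) <= distC a (dual C) + distC b (dual C))%N.
Proof.
have [ca ha ->] := distC_attain a (dual0 C).
have [cb hb ->] := distC_attain b (dual0 C).
apply: leq_trans (distC_le (a + b) (dual_add ha hb)) _.
by rewrite addrACA wt_add.
Qed.

Lemma dist0 n (C : {set vec n}) (v : vec n) : distC v (dual C) = 0%N -> v \in dual C.
Proof.
have [c hc ->] := distC_attain v (dual0 C) => /wt0 h.
suff -> : v = c by [].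
by rewrite -[v]addr0 -(vadd2 c) addrA h add0r.
Qed.

Lemma distC_mem n (C : {set vec n}) (v c : vec n) : c \in dual C -> distC (v + c) (dual C) = distC v (dual C).
Proof.
move=> hc; apply/eqP; rewrite eqn_leq; apply/andP; split.
- apply: leq_trans (distD_tri _ _ _) _.
  have : distC c (dual C) = 0%N.
    by apply/eqP; rewrite -leqn0; apply: leq_trans (distC_le c hc) _; rewrite vadd2 /wt leqn0 cards_eq0; apply/eqP/setP => i; rewrite !inE mxE eqxx.
  by move->; rewrite addn0.
- rewrite -{1}[v]addr0 -(vadd2 c) addrA.
  apply: leq_trans (distD_tri _ _ _) _.
  have : distC c (dual C) = 0%N.
    by apply/eqP; rewrite -leqn0; apply: leq_trans (distC_le c hc) _; rewrite vadd2 /wt leqn0 cards_eq0; apply/eqP/setP => i; rewrite !inE mxE eqxx.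
  by move->; rewrite addn0.
Qed.

Section RL.
Variable R : realType.
Implicit Types a b d x y B e m : R.
Lemma L_add2 (a b B : R) : a <= B -> b <= B -> a + b <= 2 * B. Proof. lra. Qed.
Lemma L_gsyn (a b e m : R) : a <= e * m -> b <= e * m -> a + b <= 2 * e * m. Proof. nra. Qed.
Lemma L_neg (d B : R) : B <= 0 -> d <= 2 * B -> d <= B. Proof. lra. Qed.
Lemma L_neg0 (d B : R) : B <= 0 -> d <= 2 * B -> d <= 0. Proof. lra. Qed.
Lemma L_half (x e0 : R) : x < e0 / 2 -> 2 * x < e0. Proof. lra. Qed.
Lemma L_eps1 (d x e0 : R) : d <= x -> x < e0 / 2 -> 0 < e0 -> d < e0. Proof. lra. Qed.
Lemma L_heps (e M : R) : e < 1000^-1 * M -> 1000 * e < M. Proof. lra. Qed.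
Lemma L_lt1 (d x : R) : d <= x -> x <= 2^-1 -> d < 1. Proof. lra. Qed.
Lemma L_contra (d c1 e n c2 : R) : c2 * n <= d -> d <= 2 * (2 * c1 * e * n) ->
  4 * c1 * e * n < c2 * n -> False.
Proof. lra. Qed.
Lemma L_contra1 (d c1 e n : R) : d <= c1 * (2 * e) * n -> d <= 2 * c1 * e * n.
Proof. lra. Qed.
Lemma L_half1 (c1 n x : R) : 0 < c1 -> 0 < n -> x <= (2 * c1 * n)^-1 -> c1 * x * n <= 2^-1.
Proof.
move=> h1 hn hx.
apply: le_trans (_ : c1 * ((2 * c1 * n)^-1) * n <= _).
  by rewrite ler_pM2r // ler_pM2l.
have -> : c1 * (2 * c1 * n)^-1 * n = 2^-1.
  by field; rewrite !gt_eqF.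
by [].
Qed.
End RL.

Lemma shiftK mZ n (HZ : 'M['F_2]_(mZ, n)) (y c : vec n) :
  c \in kerH HZ -> HZ *m (y + c) = HZ *m y.
Proof. by rewrite inE mulmxDr => /eqP ->; rewrite addr0. Qed.

Lemma kerD mZ n (HZ : 'M['F_2]_(mZ, n)) (a b : vec n) :
  a \in kerH HZ -> b \in kerH HZ -> a + b \in kerH HZ.
Proof. by rewrite !inE mulmxDr => /eqP -> /eqP ->; rewrite addr0. Qed.

Lemma sum3 n (a b z : vec n) : a + z = (a + b) + (b + z).
Proof. by rewrite addrA -(addrA a) vadd2 addr0. Qed.

Theorem lemma4p11 (R : realType) (mX mZ n : nat)
  (HX : 'M['F_2]_(mX, n)) (HZ : 'M['F_2]_(mZ, n)) (c1 c2 eps0 eps : R)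
  (hCSS : dual (kerH HX) \subset kerH HZ)
  (hclust : clustering HX HZ c1 c2 eps0)
  (heps : eps < 1000^-1 * Num.min (eps0 / 2)
                 (Num.min (c2 / (4 * c1)) ((css_dist HX HZ)%:R / (2 * c1 * n%:R))))
  (Rep : {set {set vec n}} -> {set vec n})
  (hRep : forall y, y \in goodZ HZ (1000 * eps) ->
     Rep (translates HX HZ c1 (1000 * eps) y) \in translates HX HZ c1 (1000 * eps) y)
  (eZ : 'cV['F_2]_mZ -> vec n)
  (heZ : forall y, y \in goodZ HZ (1000 * eps) ->
     eZ (HZ *m y) \in coset y (kerH HZ) :&: Rep (translates HX HZ c1 (1000 * eps) y)) :
  forall y y' : vec n, y \in goodZ HZ (1000 * eps) ->
    y' \in cluster HX HZ c1 (1000 * eps) y ->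
    y' + eZ (HZ *m y') \in coset (y + eZ (HZ *m y)) (dual (kerH HX)).
Proof.
move=> y y' hy hy'.
set e' := 1000 * eps.
set D := dual (kerH HX).
set B := 2 * c1 * e' * n%:R.
have [hc1 [hc2 [he0 hcl]]] := hclust.
have hM : 1000 * eps < Num.min (eps0 / 2)
                 (Num.min (c2 / (4 * c1)) ((css_dist HX HZ)%:R / (2 * c1 * n%:R))).
  exact: L_heps heps.
move: hM; rewrite !lt_min => /and3P[he0' hec2 _].
have hc2' : 4 * c1 * e' < c2.
  by move: hec2; rewrite ltr_pdivlMr ?mulr_gt0 // mulrC.
have hn0 : 0 <= n%:R :> R by rewrite ler0n.
have distn : forall v : vec n, (distC v D <= n)%N.
  by move=> v; apply: leq_trans (distC_le v (dual0 _)) _; apply: wt_le.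
have gsyn : forall a b : vec n, a \in goodZ HZ e' -> b \in goodZ HZ e' ->
    (wt (HZ *m (a + b)))%:R <= (2 * e') * mZ%:R :> R.
  move=> a b; rewrite !inE => ha hb; rewrite mulmxDr.
  apply: le_trans (_ : (wt (HZ *m a) + wt (HZ *m b))%:R <= _).
    by rewrite ler_nat wt_add.
  by rewrite natrD; apply: L_gsyn.
have trans : forall a b z : vec n, a \in goodZ HZ e' -> b \in goodZ HZ e' -> z \in goodZ HZ e' ->
    (distC (a + b) D)%:R <= B -> (distC (b + z) D)%:R <= B -> (distC (a + z) D)%:R <= B :> R.
  move=> a b z ha hb hz h1 h2.
  have h3 : (distC (a + z) D)%:R <= 2 * B :> R.
    rewrite (sum3 a b z); apply: le_trans (_ : (distC (a + b) D + distC (b + z) D)%:R <= _).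
      by rewrite ler_nat distD_tri.
    by rewrite natrD; apply: L_add2.
  have [heps0|heps0] := lerP eps 0.
    have hB : B <= 0.
      rewrite /B; apply: mulr_le0_ge0 => //.
      by rewrite /e'; apply: mulr_ge0_le0; [rewrite mulr_ge0 // ltW | rewrite pmulr_rle0].
    exact: L_neg hB h3.
  case: (posnP n) => [n0|npos].
    have hz0 : distC (a + z) D = 0%N.
      by apply/eqP; rewrite -leqn0; apply: leq_trans (distn _) _; rewrite n0.
    have hn' : n%:R = 0 :> R by rewrite n0.
    by rewrite hz0 /B hn' mulr0.
  have hgt : 0 < 2 * e' by rewrite /e' !mulr_gt0.
  have [hZ _] := hcl (2 * e') hgt (L_half he0').
  case: (hZ (a + z) (gsyn a z ha hz)) => hc.
    exact: L_contra1 hc.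
  exfalso.
  have hnp : 0 < n%:R :> R by rewrite ltr0n.
  have : 4 * c1 * e' * n%:R < c2 * n%:R by rewrite ltr_pM2r.
  exact: L_contra hc h3.
have goodK : forall a c : vec n, a \in goodZ HZ e' -> c \in kerH HZ -> a + c \in goodZ HZ e'.
  by move=> a c ha hc; move: ha; rewrite !inE shiftK.
have hy'g : y' \in goodZ HZ e' by move: hy'; rewrite inE => /andP[].
have hyy' : (distC (y + y') D)%:R <= B by move: hy'; rewrite inE => /andP[].
have hyy'2 : (distC (y' + y) D)%:R <= B by rewrite addrC.
have clEq : forall c, c \in kerH HZ -> cluster HX HZ c1 e' (y + c) = cluster HX HZ c1 e' (y' + c).
  move=> c hc; apply/setP => z; rewrite !inE.
  have hyc := goodK _ _ hy hc; have hy'c := goodK _ _ hy'g hc.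
  have E : (y + c) + (y' + c) = y + y' by rewrite addrACA vadd2 addr0.
  have E' : (y' + c) + (y + c) = y' + y by rewrite addrACA vadd2 addr0.
  apply/idP/idP => /andP[h0 h]; apply/andP; split => //;
    have hz : z \in goodZ HZ e' by rewrite inE.
  - by apply: (trans _ _ _ hy'c hyc hz); rewrite ?E'.
  - by apply: (trans _ _ _ hyc hy'c hz); rewrite ?E.
have TE : translates HX HZ c1 e' y' = translates HX HZ c1 e' y.
  by apply: eq_in_imset => c hc /=; rewrite clEq.
have [He1 He2] : eZ (HZ *m y) \in coset y (kerH HZ) /\
                 eZ (HZ *m y) \in Rep (translates HX HZ c1 e' y).
  by apply/andP; rewrite -in_setI; apply: heZ.
have [He1' He2'] : eZ (HZ *m y') \in coset y' (kerH HZ) /\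
                 eZ (HZ *m y') \in Rep (translates HX HZ c1 e' y).
  by apply/andP; rewrite -in_setI -TE; apply: heZ.
have /imsetP [c0 hc0 hR] := hRep y hy.
move: He2 He2'; rewrite -/e' hR !inE.
set e := eZ (HZ *m y); set f := eZ (HZ *m y').
move=> /andP [heg hd1] /andP [hfg hd2].
move: heg hd1 hfg hd2; rewrite -/e' -/B -/D => heg hd1 hfg hd2.
have {}heg : e \in goodZ HZ e' by rewrite inE.
have {}hfg : f \in goodZ HZ e' by rewrite inE.
have hyc0 := goodK _ _ hy hc0.
have hef : (distC (e + f) D)%:R <= B.
  by apply: (trans _ _ _ heg hyc0 hfg) => //; rewrite addrC.
move: He1 He1' => /imsetP [c hc Ee] /imsetP [c' hc' Ef].
pose v := (y' + f) + (y + e).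
apply/imsetP; exists v; last by rewrite /v addrCA vadd2 addr0.
have hvK : v \in kerH HZ.
  by rewrite /v /e /f Ee Ef (addrA y') (addrA y) !vadd2 !add0r; apply: kerD.
have hvd : (distC v D)%:R <= 2 * B :> R.
  have -> : v = (y + y') + (e + f) by rewrite /v addrC addrACA.
  apply: le_trans (_ : (distC (y + y') D + distC (e + f) D)%:R <= _).
    by rewrite ler_nat distD_tri.
  by rewrite natrD; apply: L_add2.
apply: dist0; apply/eqP; rewrite -leqn0.
have [heps0|heps0] := lerP eps 0.
  have hB : B <= 0.
      rewrite /B; apply: mulr_le0_ge0 => //.
      by rewrite /e'; apply: mulr_ge0_le0; [rewrite mulr_ge0 // ltW | rewrite pmulr_rle0].
  have : (distC v D)%:R <= 0%:R :> R by exact: L_neg0 hB hvd.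
  by rewrite ler_nat.
case: (posnP n) => [n0|npos].
  by apply: leq_trans (distn _) _; rewrite n0.
have hnp : 0 < n%:R :> R by rewrite ltr0n.
set eps1 := Num.min e' (2 * c1 * n%:R)^-1.
have hpos : 0 < eps1 by rewrite lt_min; apply/andP; split; [rewrite /e' !mulr_gt0 // | rewrite invr_gt0 !mulr_gt0 //].
have hle1 : eps1 <= e' by rewrite ge_min lexx.
have hle2 : eps1 <= (2 * c1 * n%:R)^-1 by rewrite ge_min lexx orbT.
have hsyn : (wt (HZ *m v))%:R <= eps1 * mZ%:R :> R.
  move: hvK; rewrite inE => /eqP ->.
  have -> : wt (0 : 'cV['F_2]_mZ) = 0%N.
    by apply/eqP; rewrite /wt cards_eq0; apply/eqP/setP => i; rewrite !inE mxE eqxx.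
  by rewrite mulr_ge0 // ltW.
have [hZ _] := hcl eps1 hpos (L_eps1 hle1 he0' he0).
case: (hZ v hsyn) => hcc.
  have hh : c1 * eps1 * n%:R <= 2^-1 by apply: L_half1.
  have : (distC v D)%:R < 1%:R :> R by exact: L_lt1 hcc hh.
  by rewrite ltr_nat ltnS.
exfalso.
have : 4 * c1 * e' * n%:R < c2 * n%:R by rewrite ltr_pM2r.
exact: L_contra hcc hvd.
Qed.
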